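(* For any family of policies $\Pi$, $\mathrm{PF}(\Pi)\subseteq \mathrm{DUS}(\Pi)$.
   Context: $\Pi$ is a family of policies of a multi-objective sequential decision problem with $d$ objectives; each $\pi\in\Pi$ has a random return vector $\mathbf{Z}^\pi\in\mathbb{R}^d$ (discounted sum of vector rewards) with finite expectation $\mathbf{V}^\pi=\mathbb{E}[\mathbf{Z}^\pi]$. For $\mathbf{x},\mathbf{y}\in\mathbb{R}^d$: $\mathbf{y}\preceq_p\mathbf{x}$ iff $y_i\le x_i$ for all $i$; $\mathbf{x}\succ_p\mathbf{y}$ iff $x_i\ge y_i$ for all $i$ and $x_i>y_i$ for some $i$. CDF: $F_{\mathbf{X}}(\mathbf{x})=P(\mathbf{X}\preceq_p\mathbf{x})$. $\mathbf{X}\succeq_{\mathrm{FSD}}\mathbf{Y}$ iff $F_{\mathbf{X}}\le F_{\mathbf{Y}}$ pointwise; $\mathbf{X}\succ_{\mathrm{FSD}}\mathbf{Y}$ iff additionally strict inequality at some point (same for real random variables). $\mathbf{X}\succ_d\mathbf{Y}$ (distributional dominance) iff $\mathbf{X}\succeq_{\mathrm{FSD}}\mathbf{Y}$ and $X_i\succ_{\mathrm{FSD}}Y_i$ for some marginal $i$. Pareto front: $\mathrm{PF}(\Pi)=\{\pi\in\Pi:\nexists\pi'\in\Pi,\ \mathbf{V}^{\pi'}\succ_p\mathbf{V}^\pi\}$. Distributional undominated set: $\mathrm{DUS}(\Pi)=\{\pi\in\Pi:\nexists\pi'\in\Pi,\ \mathbf{Z}^{\pi'}\succ_d\mathbf{Z}^\pi\}$.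 *)

(* Defs.v *)
From HB Require Import structures.
From mathcomp Require Import all_boot all_order all_algebra.
From mathcomp Require Import all_classical all_reals all_analysis.
Set Implicit Arguments. Unset Strict Implicit. Unset Printing Implicit Defensive.
Import Order.TTheory GRing.Theory Num.Theory.
Local Open Scope classical_set_scope.
Local Open Scope ring_scope.

Section MODefs.
Context {R : realType} {d : nat}.

Definition pareto_le (y x : 'I_d -> R) : Prop := forall i, y i <= x i.
Definition pareto_gt (x y : 'I_d -> R) : Prop :=
  (forall i, y i <= x i) /\ (exists i, y i < x i).

Context {dT : measure_display} {T : measurableType dT}.

Definition mcdf (P : probability T R) (X : T -> 'I_d -> R) (x : 'I_d -> R)
  : \bar R := P [set t | pareto_le (X t) x].

Definition rcdf (P : probability T R) (X : T -> R) (r : R) : \bar R :=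
  P [set t | X t <= r].

Definition mfsd_ge P X Q Y : Prop := forall x, (mcdf P X x <= mcdf Q Y x)%E.
Definition rfsd_ge P X Q Y : Prop := forall r, (rcdf P X r <= rcdf Q Y r)%E.
Definition rfsd_gt P X Q Y : Prop :=
  rfsd_ge P X Q Y /\ exists r, (rcdf P X r < rcdf Q Y r)%E.

Definition dist_dom P X Q Y : Prop :=
  mfsd_ge P X Q Y /\
  exists i : 'I_d, rfsd_gt P (fun t => X t i) Q (fun t => Y t i).

(* expected return vector V^pi = E[Z^pi] (componentwise; finite by hypothesis) *)
Definition Vexp (P : probability T R) (X : T -> 'I_d -> R) : 'I_d -> R :=
  fun i => fine ('E_P[fun t => X t i])%E.

Context {Pi : Type} (P : Pi -> probability T R) (Z : Pi -> T -> 'I_d -> R).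

Definition PF : set Pi :=
  [set pi | ~ exists pi', pareto_gt (Vexp (P pi') (Z pi')) (Vexp (P pi) (Z pi))].

Definition DUS : set Pi :=
  [set pi | ~ exists pi', dist_dom (P pi') (Z pi') (P pi) (Z pi)].

End MODefs.

(* Main.v *)
Require Import Defs.
From HB Require Import structures.
From mathcomp Require Import all_boot all_order all_algebra.
From mathcomp Require Import all_classical all_reals all_analysis.
From mathcomp Require Import lra measurable_realfun.
Import Order.TTheory GRing.Theory Num.Theory.
Import numFieldTopology.Exports.
Local Open Scope classical_set_scope.
Local Open Scope ring_scope.

Section S.
Context {R : realType} {dT : measure_display} {T : measurableType dT}.

Definition mkRV (P : probability T R) (f : T -> R) (mf : measurable_fun setT f)
  : {RV P >-> R} := HB.pack f (isMeasurableFun.Build _ _ _ _ f mf).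

Local Open Scope ereal_scope.
Lemma cdf_mk P f mf r : cdf (mkRV P f mf) r = P [set t | (f t <= r)%R].
Proof.
rewrite /cdf /distribution /pushforward /=; congr (P _).
Qed.
Lemma ccdf_mk P f mf r : ccdf (mkRV P f mf) r = 1 - P [set t | (f t <= r)%R].
Proof. by rewrite ccdf_1_cdf cdf_mk. Qed.

Ltac leb_meas H := let mD := fresh in let B := fresh in let mB := fresh in
  let h := fresh in move=> mD B mB; have h := H measurableT B mB;
  rewrite setTI in h; apply: measurableI => //; exact h.

Lemma E_mk P f mf : 'E_P[mkRV P f mf] = 'E_P[f].
Proof. by []. Qed.

Lemma mset (f : T -> R) (mf : measurable_fun setT f) r :
  measurable [set t | (f t <= r)%R].
Proof.
have := mf measurableT _ (measurable_itv `]-oo, r]); rewrite setTI.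
congr measurable; apply/seteqP; split => t /=; rewrite in_itv //.
Qed.

Lemma mono_cdf (M : probability T R) (f : T -> R) (mf : measurable_fun setT f) (r s : R) :
  (r <= s)%R -> M [set t | (f t <= r)%R] <= M [set t | (f t <= s)%R].
Proof. by move=> rs; rewrite -!(cdf_mk M f mf); apply: cdf_nondecreasing. Qed.

Lemma fsd_mean (P Q : probability T R) (X Y : T -> R)
  (mX : measurable_fun setT X) (mY : measurable_fun setT Y)
  (iX : P.-integrable setT (EFin \o X)) (iY : Q.-integrable setT (EFin \o Y))
  (hle : forall r, P [set t | (X t <= r)%R] <= Q [set t | (Y t <= r)%R]) :
  'E_Q[Y] <= 'E_P[X] /\
  (P [set t | (X t <= 0)%R] < Q [set t | (Y t <= 0)%R] -> 'E_Q[Y] < 'E_P[X]).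
Proof.
pose X' := mkRV P X mX; pose Y' := mkRV Q Y mY.
have LX : (X' : T -> R) \in Lfun P 1 by apply/Lfun1_integrable.
have LY : (Y' : T -> R) \in Lfun Q 1 by apply/Lfun1_integrable.
have fX := expectation_fin_num LX; have fY := expectation_fin_num LY.
rewrite -(E_mk P X mX) -(E_mk Q Y mY) -/X' -/Y'.
rewrite (expectation_cdf_ccdf LX) (expectation_cdf_ccdf LY).
rewrite (expectation_cdf_ccdf LX) fin_numB in fX.
rewrite (expectation_cdf_ccdf LY) fin_numB in fY.
move: fX fY.
set AX := \int[lebesgue_measure]_(r in `[0%R, +oo[) ccdf X' r.
set BX := \int[lebesgue_measure]_(r in `]-oo, 0%R[) cdf X' r.
set AY := \int[lebesgue_measure]_(r in `[0%R, +oo[) ccdf Y' r.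
set BY := \int[lebesgue_measure]_(r in `]-oo, 0%R[) cdf Y' r.
move=> /andP[fAX fBX] /andP[fAY fBY].
have hA : AY <= AX.
  apply: ge0_le_integral => //.

  - by leb_meas (ccdf_measurable Y').
  - by leb_meas (ccdf_measurable X').
  - by move=> s _; rewrite !ccdf_mk; apply: leeB.
have hB : BX <= BY.
  apply: ge0_le_integral => //.
  - by leb_meas (cdf_measurable X').
  - by leb_meas (cdf_measurable Y').
  - by move=> s _; rewrite !cdf_mk.
split; first exact: leeB.
move=> h0.
pose pX r := fine (P [set t | (X t <= r)%R]).
pose pY r := fine (Q [set t | (Y t <= r)%R]).
have eX r : P [set t | (X t <= r)%R] = (pX r)%:E.
  by rewrite /pX fineK //; apply: fin_num_measure; exact: mset.
have eY r : Q [set t | (Y t <= r)%R] = (pY r)%:E.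
  by rewrite /pY fineK //; apply: fin_num_measure; exact: mset.
have monoX r s : (r <= s)%R -> (pX r <= pX s)%R.
  by move=> rs; rewrite -lee_fin -!eX; exact: mono_cdf.
have monoY r s : (r <= s)%R -> (pY r <= pY s)%R.
  by move=> rs; rewrite -lee_fin -!eY; exact: mono_cdf.
have leXY r : (pX r <= pY r)%R by rewrite -lee_fin -eX -eY.
have c0 : (pX 0 < pY 0)%R by rewrite -lte_fin -eX -eY.
have rc : pX x @[x --> (0%R:R)^'+] --> pX 0%R.
  have := @cdf_right_continuous _ _ _ P X' 0%R.
  rewrite cdf_mk eX => /fine_cvg.
  apply: cvg_trans; apply: near_eq_cvg; near=> x => /=.
  by rewrite cdf_mk.
near (0%R:R)^'+ => δ.
have δ0 : (0 < δ)%R by near: δ; exact: nbhs_right_gt.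
have hδ : (pX δ < pY 0)%R.
  by near: δ; exact: (cvgr_lt _ rc _ c0).
pose ε := (pY 0 - pX δ)%R.
have ε0 : (0 < ε)%R by rewrite subr_gt0.
pose I : set R := `[0%R, δ]%classic.
have hA2 : AY + (ε * δ)%:E <= AX.
  have mI : measurable I by exact: measurable_itv.
  pose g s := ccdf Y' s + (ε * \1_I s)%:E.
  have mg0 : measurable_fun setT (fun s : R => ε * \1_I s)%R.
    by apply: measurable_funM => //; exact: measurable_indic.
  have mg1 : measurable_fun setT (EFin \o (fun s : R => ε * \1_I s)%R).
    exact/measurable_EFinP.
  have mg : measurable_fun setT g.
    apply: emeasurable_funD => //; exact: ccdf_measurable.
  have -> : AY + (ε * δ)%:E = \int[lebesgue_measure]_(s in `[0%R, +oo[) g s.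
    rewrite /g ge0_integralD //.
    all: try (by leb_meas mg1).
    all: try (by leb_meas (ccdf_measurable Y')).
    all: try (by move=> s _; rewrite lee_fin mulr_ge0 ?indicE ?ler0n ?(ltW ε0)).
    congr (_ + _).
    have hZ := integralZl_indic (m:=lebesgue_measure) (D:=`[0%R,+oo[%classic)
      (measurable_itv _) (fun _ => I) ε.
    rewrite /= in hZ; rewrite hZ; last 2 first.
    - by rewrite ltNge (ltW ε0).
    - exact mI.
    rewrite integral_indic //= setIidl; last first.
      by move=> x; rewrite /I /= !in_itv /= => /andP[->].
    rewrite /I lebesgue_measure_itv /= lte_fin δ0.
    by rewrite oppr0 adde0 EFinM.
  apply: ge0_le_integral => //.
  - by move=> s _; rewrite /g adde_ge0 // lee_fin mulr_ge0 ?indicE ?ler0n ?(ltW ε0).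
  - by leb_meas mg.
  - by leb_meas (ccdf_measurable X').
  move=> s; rewrite /= in_itv /= andbT => s0.
  rewrite /g !ccdf_mk eX eY indicE.
  have [sI|sI] := boolP (s \in I).
    have sd : (s <= δ)%R by move: sI; rewrite inE /I /= in_itv /= => /andP[].
    rewrite mulr1 -!EFinB -EFinD lee_fin.
    have := monoX _ _ sd; have := monoY _ _ s0; rewrite /ε; lra.
  rewrite mulr0 adde0; apply: leeB => //; rewrite lee_fin; exact: leXY.
move: hA2 hB.
rewrite -(fineK fAX) -(fineK fBX) -(fineK fAY) -(fineK fBY).
rewrite -EFinD !lee_fin -!EFinB lte_fin => h1 h2.
have : (0 < ε * δ)%R by apply: mulr_gt0.
lra.
Unshelve. all: by end_near. Qed.

Lemma fsd_mean_strict (P Q : probability T R) (X Y : T -> R)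
  (mX : measurable_fun setT X) (mY : measurable_fun setT Y)
  (iX : P.-integrable setT (EFin \o X)) (iY : Q.-integrable setT (EFin \o Y))
  (hle : forall r, P [set t | (X t <= r)%R] <= Q [set t | (Y t <= r)%R]) r :
  P [set t | (X t <= r)%R] < Q [set t | (Y t <= r)%R] -> 'E_Q[Y] < 'E_P[X].
Proof.
move=> h.
have LX : X \in Lfun P 1 by apply/Lfun1_integrable.
have LY : Y \in Lfun Q 1 by apply/Lfun1_integrable.
have LCX : (cst r : T -> R) \in Lfun P 1 by exact: Lfun_cst.
have LCY : (cst r : T -> R) \in Lfun Q 1 by exact: Lfun_cst.
have LX' : (X \- cst r)%R \in Lfun P 1 by rewrite rpredB.
have LY' : (Y \- cst r)%R \in Lfun Q 1 by rewrite rpredB.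
have mX' : measurable_fun setT (X \- cst r)%R.
  by apply: measurable_funB => //; exact: measurable_cst.
have mY' : measurable_fun setT (Y \- cst r)%R.
  by apply: measurable_funB => //; exact: measurable_cst.
have sh (M : probability T R) (f : T -> R) s :
    M [set t | ((f \- cst r)%R t <= s)%R] = M [set t | (f t <= s + r)%R].
  by congr (M _); apply/seteqP; split => t /=; rewrite lerBlDr.
have := (fsd_mean _ _ _ _ mX' mY' (proj1 (Lfun1_integrable _ _) LX')
  (proj1 (Lfun1_integrable _ _) LY')).
have hle' : forall s, P [set t | ((X \- cst r)%R t <= s)%R] <=
    Q [set t | ((Y \- cst r)%R t <= s)%R].
  by move=> s; rewrite !sh; exact: hle.
move/(_ hle') => -[_]; rewrite !sh add0r => /(_ h).
rewrite !expectationB // !expectation_cst.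
have fX := expectation_fin_num LX; have fY := expectation_fin_num LY.
by rewrite lteD2rE.
Qed.


Definition xn (d : nat) (i : 'I_d) (r : R) (n : nat) : 'I_d -> R :=
  fun j => if j == i then r else n%:R.
Arguments xn {d}.

Lemma marg_cvg (M : probability T R) (d : nat) (X : T -> 'I_d -> R)
  (mX : forall j, measurable_fun setT (fun t => X t j)) i r :
  (fun n => M [set t | pareto_le (X t) (xn i r n)]) @ \oo -->
  M [set t | (X t i <= r)%R].
Proof.
have mP x : measurable [set t | pareto_le (X t) x].
  rewrite (_ : [set t | _] = \bigcap_(j in setT) [set t | (X t j <= x j)%R]).
    apply: fin_bigcap_measurable; first exact: finite_finset.
    by move=> j _; exact: mset.
  by apply/seteqP; split => t /=; [move=> h j _; exact: h | move=> h j; exact: h].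
have -> : [set t | (X t i <= r)%R] =
    \bigcup_n [set t | pareto_le (X t) (xn i r n)].
  apply/seteqP; split => t /=.
  - move=> h; exists (Num.truncn (\sum_j `|X t j|)).+1 => //= j.
    rewrite /xn; case: eqP => [->//|_].
    apply: le_trans (ltW (truncnS_gt _)).
    apply: le_trans (ler_norm _) _.
    by rewrite (bigD1 j) //= lerDl sumr_ge0.
  - by move=> [n _ h]; have := h i; rewrite /xn eqxx.
apply: nondecreasing_cvg_mu => //.
- by apply: bigcupT_measurable => n; exact: mP.
- move=> n m nm; apply/subsetPset => t /= h j.
  apply: le_trans (h j) _; rewrite /xn; case: eqP => // _.
  by rewrite ler_nat.
Qed.

Arguments marg_cvg M {d X} mX i r.

Lemma marg_le (P Q : probability T R) (d : nat) (X Y : T -> 'I_d -> R)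
  (mX : forall j, measurable_fun setT (fun t => X t j))
  (mY : forall j, measurable_fun setT (fun t => Y t j))
  (h : forall x, mcdf P X x <= mcdf Q Y x) i r :
  P [set t | (X t i <= r)%R] <= Q [set t | (Y t i <= r)%R].
Proof.
apply: (lee_cvg_to (marg_cvg P mX i r) (marg_cvg Q mY i r)).
by apply: nearW => n; exact: h.
Qed.

End S.
Arguments marg_le {R dT T} P Q {d X Y} mX mY h i r.

Theorem corollary4p1p1 (R : realType) (d : nat) (dT : measure_display)
  (T : measurableType dT) (Pi : Type)
  (P : Pi -> probability T R) (Z : Pi -> T -> 'I_d -> R)
  (Zmeas : forall pi i, measurable_fun setT (fun t => Z pi t i))
  (Zint : forall pi i, (P pi).-integrable setT (fun t => (Z pi t i)%:E)) :
  PF P Z `<=` DUS P Z.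
Proof.
move=> pi PFpi [pi' [hm [i0 [_ [r hr]]]]].
apply: PFpi; exists pi'.
have hle i s : (P pi' [set t | (Z pi' t i <= s)%R] <=
    P pi [set t | (Z pi t i <= s)%R])%E.
  exact: (marg_le _ _ (Zmeas pi') (Zmeas pi) hm i s).
have fin p i : ('E_(P p)[fun t => Z p t i] \is a fin_num)%E.
  by apply: expectation_fin_num; apply/Lfun1_integrable; exact: Zint.
split.
- move=> i; rewrite /Vexp; apply: fine_le; [exact: fin | exact: fin |].
  exact: (fsd_mean _ _ _ _ (Zmeas pi' i) (Zmeas pi i) (Zint pi' i) (Zint pi i) (hle i)).1.
- exists i0; rewrite /Vexp; apply: fine_lt; [exact: fin | exact: fin |].
  exact: (fsd_mean_strict _ _ _ _ (Zmeas pi' i0) (Zmeas pi i0) (Zint pi' i0) (Zint pi i0) (hle i0) r hr).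
Qed.
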